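(* For $n\ge1$ let $S_n$ be the set of binary sequences of length $n$ in which no maximal run of zeros has length congruent to $1\bmod 3$, and let $c_n=|S_n|$. Then $c_n=c_{n-1}+2c_{n-3}$ for $n\ge4$, with $c_1=1$, $c_2=2$, $c_3=4$.
   Context: A ''run of zeros'' means a maximal block of consecutive zeros; e.g. $00000\in S_5$ since its only run of zeros has length $5\equiv 2\pmod 3$. *)

(* Defs.v *)
From mathcomp Require Import all_boot.
Set Implicit Arguments. Unset Strict Implicit. Unset Printing Implicit Defensive.

(* Binary sequences of length n: n.-tuple bool, with false = 0 and true = 1. *)

Definition is_zero n (s : n.-tuple bool) (k : nat) : bool :=
  (k < n) && ~~ nth true s k.

Definition max_zero_run n (s : n.-tuple bool) (i l : nat) : bool :=
  [&& 0 < l, i + l <= n,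
      all (fun k => is_zero s k) (iota i l),
      (i == 0) || ~~ is_zero s i.-1 &
      ~~ is_zero s (i + l)].

Definition S_set n : {set n.-tuple bool} :=
  [set s : n.-tuple bool |
     [forall i : 'I_n.+1, forall l : 'I_n.+1,
        max_zero_run s i l ==> (l %% 3 != 1)]].

Definition c n : nat := #|S_set n|.

(* Main.v *)
Require Import Defs.
From mathcomp Require Import all_boot zify.

Fixpoint allseq n : seq (seq bool) :=
  if n is m.+1 then map (cons true) (allseq m) ++ map (cons false) (allseq m)
  else [:: [::]].

Definition ct n (b : bool) (u : n.-tuple bool) : n.+1.-tuple bool := [tuple of b :: u].

Arguments ct {n}.
Lemma ct_inj n b : injective (@ct n b).
Proof. by move=> u v /(congr1 val) /= [] /val_inj. Qed.

Lemma card_cons n (p : pred (seq bool)) :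
  #|[set t : n.+1.-tuple bool | p t]| =
  #|[set u : n.-tuple bool | p (true :: u)]| + #|[set u : n.-tuple bool | p (false :: u)]|.
Proof.
set A := [set u : n.-tuple bool | p (true :: u)].
set B := [set u : n.-tuple bool | p (false :: u)].
rewrite -(card_imset A (@ct_inj n true)) -(card_imset B (@ct_inj n false)).
rewrite -cardsUI.
have -> : (ct true @: A) :&: (ct false @: B) = set0.
  apply/setP => t; rewrite !inE; apply/negP => /andP [/imsetP [u _ ->] /imsetP [v _ /(congr1 val)]] //.
rewrite cards0 addn0; apply: eq_card => t.
case/tupleP: t => b u; rewrite !inE.
change [tuple of b :: u] with (ct b u).
case: b => /=.
  rewrite (mem_imset _ _ (@ct_inj n true)) inE.
  case E: (_ \in ct false @: _) => //; last by rewrite orbF.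
  by case/imsetP: E => v _ /(congr1 val).
rewrite (mem_imset _ _ (@ct_inj n false)) inE.
case E: (_ \in ct true @: _) => //.
by case/imsetP: E => v _ /(congr1 val).
Qed.

Lemma card_count n (p : pred (seq bool)) :
  #|[set t : n.-tuple bool | p t]| = count p (allseq n).
Proof.
elim: n p => [|n IH] p.
  rewrite /=; case H: (p [::]).
    have -> : [set t : 0.-tuple bool | p t] = setT.
      by apply/setP => t; rewrite (tuple0 t) !inE.
    by rewrite cardsT card_tuple.
  have -> : [set t : 0.-tuple bool | p t] = set0.
    by apply/setP => t; rewrite (tuple0 t) !inE.
  by rewrite cards0.
rewrite card_cons (IH (fun u => p (true :: u))) (IH (fun u => p (false :: u))).
by rewrite /= count_cat !count_map.
Qed.

Definition isz (s : seq bool) k := ~~ nth true s k.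

Definition mzr (s : seq bool) i l :=
  [&& 0 < l, i + l <= size s, all (isz s) (iota i l),
      (i == 0) || ~~ isz s i.-1 & ~~ isz s (i + l)].

Lemma all_shift b s i l : all (isz (b :: s)) (iota i.+1 l) = all (isz s) (iota i l).
Proof. by elim: l i => //= l IH i; rewrite IH. Qed.

Lemma mzr_SS b s i l : mzr (b :: s) i.+2 l = mzr s i.+1 l.
Proof. by rewrite /mzr all_shift !addSn. Qed.

Lemma mzr_1 b s l : mzr (b :: s) 1 l = b && mzr s 0 l.
Proof.
rewrite /mzr all_shift /= add1n ltnS /isz /= negbK.
by case: b; rewrite ?andbF ?andbT.
Qed.

Lemma zeros_prefix s l : all (isz s) (iota 0 l) && ~~ isz s l = (l == find id s).
Proof.
elim: s l => [|b s IH] [|l] /=; rewrite /isz /= ?andbT //.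
  by case: b.
rewrite -/(isz (b :: s)) all_shift -andbA IH; by case: b.
Qed.


Lemma mzr_0 s l : mzr s 0 l = (0 < l) && (l == find id s).
Proof.
rewrite /mzr /= add0n; case: (0 < l) => //=.
rewrite zeros_prefix.
case E: (l == find id s); rewrite ?andbF //= (eqP E) find_size //.
Qed.

Definition bad s := exists i l, mzr s i l /\ l %% 3 = 1.
Definition badnz s := exists i l, mzr s i.+1 l /\ l %% 3 = 1.

Lemma badnz_true s : badnz (true :: s) <-> bad s.
Proof.
split.
  move=> [[|i] [l [H1 H2]]]; first by exists 0, l; rewrite mzr_1 in H1.
  by exists i.+1, l; rewrite mzr_SS in H1.
move=> [[|i] [l [H1 H2]]]; first by exists 0, l; rewrite mzr_1.
by exists i.+1, l; rewrite mzr_SS.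
Qed.

Lemma badnz_false s : badnz (false :: s) <-> badnz s.
Proof.
split.
  move=> [[|i] [l [H1 H2]]]; first by rewrite mzr_1 in H1.
  by exists i, l; rewrite mzr_SS in H1.
move=> [i [l [H1 H2]]]; by exists i.+1, l; rewrite mzr_SS.
Qed.

Lemma bad_split s : bad s <-> badnz s \/ (0 < find id s /\ find id s %% 3 = 1).
Proof.
split.
  move=> [[|i] [l [H1 H2]]]; last by left; exists i, l.
  move: H1; rewrite mzr_0 => /andP [H0 /eqP E]; right; by subst.
move=> [[i [l [H1 H2]]]|[H1 H2]]; first by exists i.+1, l.
by exists 0, (find id s); rewrite mzr_0 H1 eqxx.
Qed.

Definition step (b : bool) (o : option nat) : option nat :=
  match o with
  | None => None
  | Some k => if b then (if k == 1 then None else Some 0)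
              else Some (if k == 3 then 1 else k.+1)
  end.

Definition st (s : seq bool) : option nat := foldr step (Some 0) s.

Definition cls z := if z == 0 then 0 else (z.-1 %% 3).+1.

Lemma st_inv s : match st s with
  | None => badnz s
  | Some k => ~ badnz s /\ k = cls (find id s) end.
Proof.
elim: s => [|b s IH] /=.
  by split => // [[i [l [H _]]]]; move: H; rewrite /mzr /=; case: l => // l; rewrite addnS ltn0 andbF.
rewrite -/(st s); case: b; case: (st s) IH => [k [H1 H2]|H] /=.
- case: eqP => Hk.
    apply/badnz_true/bad_split; right; move: Hk; rewrite H2 /cls.
    case: eqP => Hz //= [] Hm; split; [lia|lia].
  split => //; move/badnz_true/bad_split => [//|[Ha Hb]].
  apply: Hk; rewrite H2 /cls; case: eqP => Hz /=; lia.
- by apply/badnz_true/bad_split; left.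
- split; first by move/badnz_false.
  rewrite H2 /cls /=; case: (find id s) => [|z] //=; case: ifP => /eqP H3; lia.
- by apply/badnz_false.
Qed.

Definition acc (o : option nat) := if o is Some k then k != 1 else false.

Lemma acc_good s : acc (st s) <-> ~ bad s.
Proof.
have := st_inv s; case: (st s) => [k [H1 H2]|H] /=.
  split.
    move=> Hk /bad_split [//|[Ha Hb]]; move: Hk; rewrite H2 /cls.
    by case: (find id s) Ha Hb => [|z] //= Ha Hb; move/eqP; lia.
  move=> nb; apply/eqP => Hk; apply: nb; apply/bad_split; right.
  move: Hk; rewrite H2 /cls; case: (find id s) => [|z] //= [] Hm; lia.
by split => // nb; case: nb; apply/bad_split; left.
Qed.

Lemma is_zeroE n (t : n.-tuple bool) : is_zero t =1 isz t.
Proof.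
move=> k; rewrite /is_zero /isz; case: ltnP => //= H.
by rewrite nth_default // size_tuple.
Qed.

Lemma mzrE n (t : n.-tuple bool) i l : max_zero_run t i l = mzr t i l.
Proof. by rewrite /max_zero_run /mzr size_tuple (eq_all (@is_zeroE n t)) !(@is_zeroE n t). Qed.

Lemma S_setE n (t : n.-tuple bool) : (t \in S_set n) = acc (st t).
Proof.
apply/idP/idP.
  move=> H; apply/acc_good => [[i [l [Hm Hl]]]].
  have Hs := Hm; move: Hs => /and5P [_ Hil _ _ _]; rewrite size_tuple in Hil.
  have Hi : i < n.+1 by lia.
  have Hl' : l < n.+1 by lia.
  move: H; rewrite inE => /forallP /(_ (Ordinal Hi)) /forallP /(_ (Ordinal Hl')) /implyP /=.
  by rewrite mzrE => /(_ Hm); rewrite Hl.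
move/acc_good => nb; rewrite inE; apply/forallP => i; apply/forallP => l; apply/implyP => Hm.
apply/negP => /eqP Hl; apply: nb; exists i, l; by rewrite -mzrE.
Qed.

Lemma st_bound s : if st s is Some k then k <= 3 else true.
Proof.
elim: s => [|b s IH] //=; rewrite -/(st s); case: (st s) IH => [k Hk|] //=.
case: b; first by case: eqP.
case: eqP => //; lia.
Qed.

Definition N q n := count (fun s => st s == q) (allseq n).

Lemma count_decomp (g : option nat -> bool) L :
  count (fun s => g (st s)) L =
  g None * count (fun s => st s == None) L +
  g (Some 0) * count (fun s => st s == Some 0) L +
  g (Some 1) * count (fun s => st s == Some 1) L +
  g (Some 2) * count (fun s => st s == Some 2) L +
  g (Some 3) * count (fun s => st s == Some 3) L.
Proof.
elim: L => [|x L IH] /=; first by rewrite !muln0.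
rewrite IH; have := st_bound x.
case: (st x) => [[|[|[|[|k]]]]|] //= _; case: (g _); lia.
Qed.

Lemma N_S q n : N q n.+1 =
  count (fun s => step true (st s) == q) (allseq n) +
  count (fun s => step false (st s) == q) (allseq n).
Proof. by rewrite /N /= count_cat !count_map. Qed.

Lemma cE n : c n = N (Some 0) n + N (Some 2) n + N (Some 3) n.
Proof.
rewrite /c (_ : S_set n = [set t : n.-tuple bool | acc (st t)]); last first.
  by apply/setP => t; rewrite [in RHS]inE S_setE.
rewrite (card_count n (fun s => acc (st s))) (count_decomp acc) /N /=; lia.
Qed.

Lemma recA n : N (Some 0) n.+1 = N (Some 0) n + N (Some 2) n + N (Some 3) n.
Proof. rewrite N_S (count_decomp (fun o => step true o == _)) (count_decomp (fun o => step false o == _)) /N /=; lia. Qed.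
Lemma recB1 n : N (Some 1) n.+1 = N (Some 0) n + N (Some 3) n.
Proof. rewrite N_S (count_decomp (fun o => step true o == _)) (count_decomp (fun o => step false o == _)) /N /=; lia. Qed.
Lemma recB2 n : N (Some 2) n.+1 = N (Some 1) n.
Proof. rewrite N_S (count_decomp (fun o => step true o == _)) (count_decomp (fun o => step false o == _)) /N /=; lia. Qed.
Lemma recB3 n : N (Some 3) n.+1 = N (Some 2) n.
Proof. rewrite N_S (count_decomp (fun o => step true o == _)) (count_decomp (fun o => step false o == _)) /N /=; lia. Qed.

Theorem theorem4 :
  (forall n : nat, 4 <= n -> c n = c n.-1 + 2 * c (n - 3)) /\
  c 1 = 1 /\ c 2 = 2 /\ c 3 = 4.
Proof.
split; last by rewrite !cE.
move=> n Hn; have -> : n = (n - 4).+4 by lia.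
set m := n - 4.
have -> : (m.+4).-1 = m.+3 by [].
have -> : m.+4 - 3 = m.+1 by lia.
rewrite !cE; do 12! rewrite ?recA ?recB1 ?recB2 ?recB3; lia.
Qed.
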